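(* Let $n \ge 1$, $1 \le q \le n$, $S \subseteq B_n$, $r \in [0:n-1]$ and $b \in \{0,1\}$ such that $1 \le |S(r,b)| \le |S(r,1-b)|$. Then $$m_q(S) \le m_q(S(r,1-b)) + m_q(S(r,b)) + m_{q-1}(S(r,b)).$$
   Context: $B_n = \{0,1\}^n$ with coordinates $x = (x_{n-1},\ldots,x_0)$. For $S \subseteq B_n$, $r \in [0:n-1]$, $c \in \{0,1\}$: $S(r,c) = \{x \in S : x_r = c\}$. A $q$-dimensional subcube of $B_n$ is a set $\{x \in B_n : x_i = b(i) \text{ for all } i \in Q\}$ with $Q \subseteq [0:n-1]$, $|Q| = n-q$, $b: Q \to \{0,1\}$. $m_q(T)$ denotes the number of $q$-dimensional subcubes of $B_n$ contained in $T \subseteq B_n$ (for $q = 0$ this is $|T|$). *)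

(* Defs.v *)
From mathcomp Require Import all_boot all_order.
Set Implicit Arguments. Unset Strict Implicit. Unset Printing Implicit Defensive.

Definition Bn (n : nat) := {ffun 'I_n -> bool}.

Definition slice n (S : {set Bn n}) (r : 'I_n) (c : bool) : {set Bn n} :=
  [set x in S | x r == c].

Definition cube n (Q : {set 'I_n}) (b : {ffun 'I_n -> bool}) : {set Bn n} :=
  [set x : Bn n | [forall i in Q, x i == b i]].

Definition is_subcube n (q : nat) (C : {set Bn n}) : bool :=
  [exists Q : {set 'I_n}, exists b : {ffun 'I_n -> bool},
     (#|Q| == n - q) && (C == cube Q b)].

Definition m n (q : nat) (T : {set Bn n}) : nat :=
  #|[set C : {set Bn n} | is_subcube q C && (C \subset T)]|.

(* Main.v *)
Require Import Defs.
From mathcomp Require Import all_boot all_order.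
From mathcomp Require Import zify.

Lemma cardsU_le (T : finType) (A B : {set T}) : #|A :|: B| <= #|A| + #|B|.
Proof. by rewrite cardsU leq_subr. Qed.
Arguments cardsU_le {T}.

Definition upd n (r : 'I_n) (c : bool) (x : Bn n) : Bn n :=
  [ffun i => if i == r then c else x i].
Arguments upd {n}.

Theorem mainTheorem3 (n : nat) (q : nat) (S : {set Bn n}) (r : 'I_n) (b : bool) :
  1 <= n -> 1 <= q -> q <= n ->
  1 <= #|slice S r b| -> #|slice S r b| <= #|slice S r (~~ b)| ->
  m q S <= m q (slice S r (~~ b)) + m q (slice S r b) + m q.-1 (slice S r b).
Proof.
move=> _ q1 qn _ _.
pose P := fun k (T : {set Bn n}) => [set C : {set Bn n} | is_subcube k C && (C \subset T)].
set A3 := [set C in P q S | ~~ (C \subset slice S r (~~ b)) && ~~ (C \subset slice S r b)].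
set f := fun C : {set Bn n} => C :&: [set x : Bn n | x r == b].
have key : forall C, C \in A3 ->
  exists (Q : {set 'I_n}) (bb : {ffun 'I_n -> bool}), [/\ r \notin Q, #|Q| = n - q, C = cube Q bb & C \subset S].
  move=> C; rewrite !inE => /andP[/andP[/existsP[Q /existsP[bb /andP[/eqP hQ /eqP hC]]] CS] /andP[n1 n2]].
  exists Q, bb; split=> //.
  apply/negP => rQ; move: n1 n2; case hb: (bb r == b).
    move=> _ /negP nn; apply: nn; apply/subsetP => x xC; rewrite !inE (subsetP CS _ xC) /=.
    by move: xC; rewrite hC inE => /forallP/(_ r); rewrite rQ /= => /eqP ->.
  move=> /negP nn _; apply: nn; apply/subsetP => x xC; rewrite !inE (subsetP CS _ xC) /=.
  move: xC; rewrite hC inE => /forallP/(_ r); rewrite rQ /= => /eqP ->.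
  by move: hb; case: (bb r); move: (b) => c; case: c.
have recov : forall C, C \in A3 -> C = [set x | upd r b x \in f C].
  move=> C /key[Q [bb [rQ _ -> _]]]; apply/setP => x; rewrite !inE /= /upd ffunE !eqxx andbT.
  apply/forallP/forallP => h i; apply/implyP => iQ; move/(_ i): h; rewrite iQ /=;
  rewrite ffunE; case: (i =P r) => [ir|_ //]; by move: rQ; rewrite -ir iQ.
have inj : {in A3 &, injective f}.
  by move=> C1 C2 h1 h2 e; rewrite (recov _ h1) (recov _ h2) e.
have sub3 : f @: A3 \subset P q.-1 (slice S r b).
  apply/subsetP => D /imsetP[C hC ->]; have [Q [bb [rQ cQ eC CS]]] := key _ hC.
  rewrite inE; apply/andP; split.
    apply/existsP; exists (r |: Q); apply/existsP;
      exists [ffun i => if i == r then b else bb i].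
    apply/andP; split; first by rewrite cardsU1 rQ cQ; apply/eqP; lia.
    apply/eqP/setP => x; rewrite /f eC !inE.
    apply/idP/idP.
      move=> /andP[/forallP h /eqP xr]; apply/forallP => i; apply/implyP;
        rewrite !inE ffunE; case: eqP => [-> _|_ /= iQ]; first by rewrite xr.
      by move/(_ i): h; rewrite iQ.
    move=> /forallP h; apply/andP; split.
      apply/forallP => i; apply/implyP => iQ; move/(_ i): h; rewrite !inE iQ orbT /= ffunE.
      by case: (i =P r) => [ir|//]; move: rQ; rewrite -ir iQ.
    by move/(_ r): h; rewrite !inE eqxx /= ffunE eqxx.
  apply/subsetP => x; rewrite /f !inE => /andP[xC ->]; rewrite andbT.
  by rewrite (subsetP CS) // eC.
have cover : P q S \subset (P q (slice S r (~~ b)) :|: P q (slice S r b)) :|: A3.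
  apply/subsetP => C hC; rewrite !inE.
  move: hC; rewrite inE => /andP[sc CS]; rewrite sc CS /=.
  by case: (C \subset slice S r (~~ b)); case: (C \subset slice S r b).
rewrite /m; change (#|P q S| <= #|P q (slice S r (~~ b))| + #|P q (slice S r b)| + #|P q.-1 (slice S r b)|).
apply: leq_trans (subset_leq_card cover) _.
have H1 := cardsU_le (P q (slice S r (~~b)) :|: P q (slice S r b)) A3; apply: leq_trans H1 _; apply: leq_add; first exact: (cardsU_le (P q (slice S r (~~b))) (P q (slice S r b))).
have E : #|f @: A3| = #|A3| by exact: card_in_imset.
by move: (subset_leq_card sub3); rewrite E.
Qed.
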